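(* Let $a\in C[0,1]$ satisfy: the open sets $\Omega_-:=a^{-1}((-\infty,0))$ and $\Omega_+:=a^{-1}((0,\infty))$ consist of finitely many nontrivial open intervals, $\Omega_-=\bigcup_{j=1}^r(\alpha_j,\beta_j)$ and $\Omega_+=\bigcup_{i=1}^s(\gamma_i,\varrho_i)$, $a$ vanishes at the endpoints of these intervals, and they are adjacent and interlacing (each interior interval is surrounded by two intervals of the opposite sign). For $j\in\{1,\dots,r\}$ and $\lambda\in\mathbb R$, let $\ell^{\min}_{\lambda,j}$ denote the minimal positive solution of $-u''=\lambda u+a(x)u^2$ in $(\alpha_j,\beta_j)$ subject to: $u(\alpha_j)=u(\beta_j)=\infty$ if $0<\alpha_j<\beta_j<1$; $u(0)=0$, $u(\beta_j)=\infty$ if $0=\alpha_j<\beta_j<1$; $u(\alpha_j)=\infty$, $u(1)=0$ if $0<\alpha_j<\beta_j=1$. Then for every $j\in\{1,\dots,r\}$ and every $x\in(\alpha_j,\beta_j)$, $$\lim_{\lambda\downarrow-\infty}\ell^{\min}_{\lambda,j}(x)=0,$$ uniformly on compact subsets of $(\alpha_j,\beta_j)$.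
   Context: A boundary condition $u=\infty$ at an endpoint $c$ means $u(x)\to+\infty$ as $x\to c$ from inside the interval (large/blow-up solutions). The minimal positive solution is the pointwise smallest positive solution of the corresponding singular boundary value problem; its existence is known. *)

(* Defs.v *)
From Stdlib Require Import Reals Lra.
From Coquelicot Require Import Coquelicot.
Open Scope R_scope.

Definition left_bc (u : R -> R) (c : R) : Prop :=
  if Req_EM_T c 0 then filterlim u (at_right c) (locally 0)
  else filterlim u (at_right c) (Rbar_locally p_infty).

Definition right_bc (u : R -> R) (d : R) : Prop :=
  if Req_EM_T d 1 then filterlim u (at_left d) (locally 0)
  else filterlim u (at_left d) (Rbar_locally p_infty).

Definition pos_solution (a : R -> R) (lam al be : R) (u : R -> R) : Prop :=
  (forall x, al < x < be ->
     0 < u x /\ ex_derive u x /\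
     is_derive (Derive u) x (- (lam * u x + a x * (u x) ^ 2))) /\
  left_bc u al /\ right_bc u be.

Definition minimal_pos_solution (a : R -> R) (lam al be : R) (u : R -> R) : Prop :=
  pos_solution a lam al be u /\
  forall v, pos_solution a lam al be v -> forall x, al < x < be -> u x <= v x.

(* Main.v *)
Require Import Defs.
From Stdlib Require Import Reals Lra Lia.
From Coquelicot Require Import Coquelicot.
Open Scope R_scope.


Lemma maxp (f f1 : R -> R) (p q : R) :
  p <= q ->
  (forall x, p <= x <= q -> is_derive f x (f1 x)) ->
  (forall x, p < x < q -> 0 < f x -> exists f2, is_derive f1 x f2 /\ 0 < f2) ->
  f p <= 0 -> f q <= 0 -> forall x, p <= x <= q -> f x <= 0.
Proof.
  intros Hpq Hd Hd2 Hp Hq x0 Hx0.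
  destruct (Rle_or_lt (f x0) 0) as [H|H]; [exact H|exfalso].
  destruct (continuity_ab_maj f p q Hpq) as [m [Hm1 Hm2]].
  { intros c Hc. apply continuity_pt_filterlim. apply (ex_derive_continuous (K:=R_AbsRing) (V:=R_NormedModule)).
    eexists. apply Hd; auto. }
  assert (Hfm : 0 < f m) by (specialize (Hm1 x0 Hx0); lra).
  assert (Hmi : p < m < q).
  { destruct Hm2 as [[H1|H1] [H2|H2]]; subst; try lra. }
  assert (Hdl : derivable_pt_lim f m (f1 m)) by (apply is_derive_Reals; apply Hd; lra).
  assert (H0 : f1 m = 0).
  { rewrite <- (derive_pt_eq_0 f m (f1 m) (exist _ (f1 m) Hdl) Hdl).
    apply deriv_maximum with p q; try lra. intros; apply Hm1; lra. }
  destruct (Hd2 m Hmi Hfm) as [f2 [Hf2 Hf2p]].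
  apply is_derive_Reals in Hf2.
  destruct (Hf2 f2 Hf2p) as [del Hdel].
  set (h := Rmin (del/2) ((q-m)/2)).
  assert (Hh0 : 0 < h) by (unfold h; apply Rmin_glb_lt; destruct del; simpl; lra).
  assert (Hh1 : h <= del/2) by apply Rmin_l.
  assert (Hh2 : h <= (q-m)/2) by apply Rmin_r.
  destruct (MVT_cor2 f f1 m (m+h)) as [c [Hc1 Hc2]]; [lra| |].
  { intros c Hc. apply is_derive_Reals, Hd; lra. }
  assert (Hpos : 0 < f1 c).
  { specialize (Hdel (c - m)).
    assert (c - m <> 0) by lra.
    assert (Rabs (c - m) < del) by (rewrite Rabs_right; destruct del; simpl in *; lra).
    specialize (Hdel H1 H2).
    replace (m + (c - m)) with c in Hdel by ring.
    rewrite H0 in Hdel.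
    apply Rabs_def2 in Hdel. destruct Hdel as [_ Hl].
    assert (0 < (f1 c - 0) / (c - m)) by lra.
    assert (0 < c - m) by lra.
    unfold Rdiv in H3. rewrite Rminus_0_r in H3.
    apply Rmult_lt_reg_r with (/ (c-m)). apply Rinv_0_lt_compat; lra. lra. }
  assert (f (m+h) <= f m) by (apply Hm1; lra).
  nra.
Qed.

Lemma dw (A p q e x : R) : p <= x <= q -> 0 < e ->
  is_derive (fun y => A / (y-p+e)^2 + A/(q-y+e)^2) x
     (-2*A/(x-p+e)^3 + 2*A/(q-x+e)^3).
Proof.
  intros Hx He. auto_derive.
  - assert (0 < x-p+e) by lra; assert (0 < q-x+e) by lra; repeat split; apply Rgt_not_eq; repeat apply Rmult_lt_0_compat; lra.
  - field. split; lra.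
Qed.

Lemma dw1 (A p q e x : R) : p <= x <= q -> 0 < e ->
  is_derive (fun y => -2*A/(y-p+e)^3 + 2*A/(q-y+e)^3) x
     (6*A/(x-p+e)^4 + 6*A/(q-x+e)^4).
Proof.
  intros Hx He. auto_derive.
  - assert (0 < x-p+e) by lra; assert (0 < q-x+e) by lra; repeat split; apply Rgt_not_eq; repeat apply Rmult_lt_0_compat; lra.
  - field. split; lra.
Qed.

Lemma der_sub (f g : R -> R) x a b : is_derive f x a -> is_derive g x b ->
  is_derive (fun y => f y - g y) x (a - b).
Proof. intros H1 H2. exact (is_derive_minus f g x a b H1 H2). Qed.

Lemma step1 (u u1 g : R -> R) (kap mu p q : R) : 0 < kap -> 0 <= mu -> p < q ->
  (forall x, p <= x <= q -> 0 < u x /\ is_derive u x (u1 x) /\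
      is_derive u1 x (mu * u x + g x * (u x)^2) /\ kap <= g x) ->
  forall x, p < x < q -> u x <= 6/kap/(x-p)^2 + 6/kap/(q-x)^2.
Proof.
  intros Hk Hmu Hpq Hu x Hx.
  set (A := 6/kap).
  assert (HA : 0 < A) by (unfold A; apply Rdiv_lt_0_compat; lra).
  assert (HkA : kap * A = 6) by (unfold A; field; lra).
  destruct (continuity_ab_maj u p q) as [m [Hm1 Hm2]]; [lra| |].
  { intros c Hc. apply continuity_pt_filterlim.
    apply (ex_derive_continuous (K:=R_AbsRing) (V:=R_NormedModule)).
    eexists. apply Hu; auto. }
  set (K := u m + 1).
  assert (HK : 0 < K) by (unfold K; destruct (Hu m Hm2) as [H _]; lra).
  set (e := Rmin 1 (A/K)).
  assert (He0 : 0 < e) by (unfold e; apply Rmin_glb_lt; [lra| apply Rdiv_lt_0_compat; lra]).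
  assert (He1 : e <= 1) by apply Rmin_l.
  assert (He2 : e * K <= A).
  { assert (e <= A/K) by apply Rmin_r.
    apply Rmult_le_compat_r with (r:=K) in H; [|lra].
    replace (A / K * K) with A in H by (field; lra). exact H. }
  assert (HeK : K <= A / e^2).
  { apply Rmult_le_reg_r with (e^2). nra.
    replace (A / e^2 * e^2) with A by (field; lra). nra. }
  set (w := fun y => A / (y-p+e)^2 + A/(q-y+e)^2).
  set (w1 := fun y => -2*A/(y-p+e)^3 + 2*A/(q-y+e)^3).
  assert (Hcmp : forall y, p <= y <= q -> u y - w y <= 0).
  { apply maxp with (f1 := fun y => u1 y - w1 y); [lra| | | |].
    - intros y Hy. apply der_sub. apply Hu; auto. apply dw; auto.
    - intros y Hy Hf. exists (mu * u y + g y * (u y)^2 - (6*A/(y-p+e)^4 + 6*A/(q-y+e)^4)).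
      split. apply der_sub. apply Hu; lra. apply dw1; lra.
      destruct (Hu y (conj (Rlt_le _ _ (proj1 Hy)) (Rlt_le _ _ (proj2 Hy)))) as [Hu0 [_ [_ Hg]]].
      unfold w in Hf.
      assert (0 < y-p+e) by lra. assert (0 < q-y+e) by lra.
      set (i1 := / (y-p+e)). set (i2 := /(q-y+e)).
      assert (0 < i1) by (apply Rinv_0_lt_compat; lra).
      assert (0 < i2) by (apply Rinv_0_lt_compat; lra).
      replace (A / (y - p + e) ^ 2 + A / (q - y + e) ^ 2) with (A*i1^2 + A*i2^2) in Hf
        by (unfold i1, i2; field; lra).
      replace (6 * A / (y - p + e) ^ 4 + 6 * A / (q - y + e) ^ 4) with (6*A*i1^4 + 6*A*i2^4)
        by (unfold i1, i2; field; lra).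
      set (W := A*i1^2 + A*i2^2) in *.
      assert (HW : 0 < W) by (unfold W; nra).
      assert (Hk1 : kap * W^2 >= 6*A*i1^4 + 6*A*i2^4).
      { assert (E : kap * W^2 - (6*A*i1^4 + 6*A*i2^4) = (kap*A - 6)*A*(i1^4+i2^4) + 2*(kap*(A*A)*(i1^2*i2^2))) by (unfold W; ring).
        rewrite HkA in E.
        assert (0 <= kap*(A*A)*(i1^2*i2^2)).
        { apply Rmult_le_pos. apply Rmult_le_pos; nra. nra. }
        lra. }
      assert (Hk2 : kap * W^2 < g y * u y ^2).
      { apply Rlt_le_trans with (kap * u y ^2). apply Rmult_lt_compat_l; auto. nra. nra. }
      assert (0 <= mu * u y) by nra.
      lra.
    - unfold w. assert (u p <= u m) by (apply Hm1; lra).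
      assert (0 < A / (q-p+e)^2) by (apply Rdiv_lt_0_compat; [lra| apply pow_lt; lra]).
      replace (p-p+e) with e by ring. unfold K in HeK. lra.
    - unfold w. assert (u q <= u m) by (apply Hm1; lra).
      assert (0 < A / (q-p+e)^2) by (apply Rdiv_lt_0_compat; [lra| apply pow_lt; lra]).
      replace (q-q+e) with e by ring. unfold K in HeK. lra. }
  specialize (Hcmp x (conj (Rlt_le _ _ (proj1 Hx)) (Rlt_le _ _ (proj2 Hx)))).
  unfold w in Hcmp.
  assert (A / (x-p+e)^2 <= A / (x-p)^2).
  { apply Rmult_le_compat_l; [lra|]. apply Rinv_le_contravar. apply pow_lt; lra.
    apply pow_incr; lra. }
  assert (A / (q-x+e)^2 <= A / (q-x)^2).
  { apply Rmult_le_compat_l; [lra|]. apply Rinv_le_contravar. apply pow_lt; lra.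
    apply pow_incr; lra. }
  lra.
Qed.

Lemma dv (M r p q x : R) :
  is_derive (fun y => M*(exp(-r*(y-p)) + exp(-r*(q-y)))) x
     (M*(-r*exp(-r*(x-p)) + r*exp(-r*(q-x)))).
Proof. auto_derive; auto. unfold Rminus. ring. Qed.

Lemma dv1 (M r p q x : R) :
  is_derive (fun y => M*(-r*exp(-r*(y-p)) + r*exp(-r*(q-y)))) x
     (r^2 * (M*(exp(-r*(x-p)) + exp(-r*(q-x))))).
Proof. auto_derive; auto. unfold Rminus. ring. Qed.

Lemma step2 (u u1 g : R -> R) (M mu r p q : R) : 0 < r -> mu = r^2 -> p < q -> 0 <= M ->
  (forall x, p <= x <= q -> is_derive u x (u1 x) /\
      is_derive u1 x (mu * u x + g x * (u x)^2) /\ 0 <= g x /\ u x <= M) ->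
  forall x, p <= x <= q -> u x <= M*(exp(-r*(x-p)) + exp(-r*(q-x))).
Proof.
  intros Hr Hmu Hpq HM Hu x Hx.
  set (v := fun y => M*(exp(-r*(y-p)) + exp(-r*(q-y)))).
  assert (Hcmp : forall y, p <= y <= q -> u y - v y <= 0).
  { apply maxp with (f1 := fun y => u1 y - M*(-r*exp(-r*(y-p)) + r*exp(-r*(q-y)))); [lra| | | |].
    - intros y Hy. apply der_sub. apply Hu; auto. apply dv.
    - intros y Hy Hf. exists (mu * u y + g y * (u y)^2 - r^2 * v y).
      split. apply der_sub. apply Hu; lra. apply dv1.
      destruct (Hu y (conj (Rlt_le _ _ (proj1 Hy)) (Rlt_le _ _ (proj2 Hy)))) as [_ [_ [Hg _]]].
      subst mu. assert (0 < r^2) by (apply pow_lt; lra).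
      assert (0 <= g y * u y ^2) by (apply Rmult_le_pos; nra).
      nra.
    - unfold v. replace (-r*(p-p)) with 0 by ring. rewrite exp_0.
      assert (u p <= M) by (apply Hu; lra). pose proof (exp_pos (-r*(q-p))). nra.
    - unfold v. replace (-r*(q-q)) with 0 by ring. rewrite exp_0.
      assert (u q <= M) by (apply Hu; lra). pose proof (exp_pos (-r*(q-p))). nra. }
  specialize (Hcmp x Hx). unfold v in Hcmp. lra.
Qed.

Lemma key (a : R -> R) (al be : R) (l : R -> R -> R) :
  (forall x, al < x < be -> continuity_pt a x) ->
  (forall x, al < x < be -> a x < 0) ->
  (forall lam x, al < x < be -> 0 < l lam x /\ ex_derive (l lam) x /\
      is_derive (Derive (l lam)) x (- (lam * l lam x + a x * (l lam x) ^ 2))) ->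
  forall c d, al < c -> d < be -> forall eps, 0 < eps ->
    exists L, forall lam, lam < L -> forall x, c <= x <= d -> Rabs (l lam x) < eps.
Proof.
  intros Hac Hneg Hl c d Hc Hd eps Heps.
  destruct (Rlt_or_le d c) as [Hdc|Hcd].
  { exists 0. intros. lra. }
  set (del := Rmin (c-al) (be-d) / 4).
  assert (Hdel0 : 0 < del) by (unfold del; apply Rdiv_lt_0_compat; [apply Rmin_glb_lt; lra|lra]).
  assert (Hdel1 : del <= (c-al)/4) by (unfold del; pose proof (Rmin_l (c-al) (be-d)); lra).
  assert (Hdel2 : del <= (be-d)/4) by (unfold del; pose proof (Rmin_r (c-al) (be-d)); lra).
  set (p := c - 2*del). set (q := d + 2*del).
  set (p' := c - del). set (q' := d + del).
  destruct (continuity_ab_maj a p q) as [m [Hm1 Hm2]]; [unfold p, q; lra| |].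
  { intros y Hy. apply Hac. unfold p, q in Hy. lra. }
  set (kap := - a m).
  assert (Hkap : 0 < kap) by (unfold kap; assert (a m < 0) by (apply Hneg; unfold p,q in Hm2; lra); lra).
  set (A := 6/kap).
  assert (HA : 0 < A) by (unfold A; apply Rdiv_lt_0_compat; lra).
  set (M := 2*(A/del^2)).
  assert (HM : 0 < M) by (unfold M; apply Rmult_lt_0_compat; [lra|apply Rdiv_lt_0_compat; [lra|apply pow_lt; lra]]).
  set (R0 := 2*M/(del*eps)).
  assert (HR0 : 0 < R0) by (unfold R0; apply Rdiv_lt_0_compat; [lra|apply Rmult_lt_0_compat; lra]).
  exists (-(R0^2) - 1).
  intros lam Hlam x Hx.
  set (u := l lam).
  set (mu := - lam).
  set (r := sqrt mu).
  assert (Hmu : R0^2 < mu) by (unfold mu; lra).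
  assert (Hr : R0 < r).
  { unfold r. rewrite <- (sqrt_pow2 R0) by lra. apply sqrt_lt_1_alt. split; [nra|lra]. }
  assert (Hr2 : mu = r^2) by (unfold r; rewrite pow2_sqrt; [reflexivity|nra]).
  assert (Hsol : forall y, p <= y <= q -> 0 < u y /\ is_derive u y (Derive u y) /\
     is_derive (Derive u) y (mu * u y + (- a y) * (u y)^2) /\ kap <= - a y).
  { intros y Hy. assert (Hy' : al < y < be) by (unfold p, q in Hy; lra).
    destruct (Hl lam y Hy') as [H1 [H2 H3]]. split; [exact H1|]. split.
    apply Derive_correct; exact H2. split.
    replace (mu * u y + - a y * u y ^ 2) with (- (lam * l lam y + a y * l lam y ^ 2))
      by (unfold mu, u; ring). exact H3.
    unfold kap. assert (a y <= a m) by (apply Hm1; auto). lra. }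
  assert (Hb1 : forall y, p' <= y <= q' -> u y <= M).
  { intros y Hy.
    assert (Hy' : p < y < q) by (unfold p, q, p', q' in *; lra).
    pose proof (step1 u (Derive u) (fun y => - a y) kap mu p q Hkap ltac:(nra)
       ltac:(unfold p, q; lra) Hsol y Hy') as H.
    fold A in H.
    assert (A / (y-p)^2 <= A / del^2).
    { apply Rmult_le_compat_l; [lra|]. apply Rinv_le_contravar. apply pow_lt; lra.
      apply pow_incr; unfold p, p' in *; lra. }
    assert (A / (q-y)^2 <= A / del^2).
    { apply Rmult_le_compat_l; [lra|]. apply Rinv_le_contravar. apply pow_lt; lra.
      apply pow_incr; unfold q, q' in *; lra. }
    unfold M. lra. }
  assert (Hr0 : 0 < r) by lra.
  pose proof (step2 u (Derive u) (fun y => - a y) M mu r p' q' Hr0 Hr2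
     ltac:(unfold p', q'; lra) ltac:(lra)) as H2.
  assert (Hx' : p' <= x <= q') by (unfold p', q'; lra).
  specialize (H2 ltac:(intros y Hy; assert (Hy' : p <= y <= q) by (unfold p,q,p',q' in *; lra);
      destruct (Hsol y Hy') as [_ [Ha [Hb Hc']]]; split; [exact Ha|split; [exact Hb|split; [lra|apply Hb1; exact Hy]]]) x Hx').
  assert (E1 : exp (-r*(x-p')) <= exp (-r*del)).
  { destruct (Req_dec (-r*(x-p')) (-r*del)) as [He|He]; [rewrite He; lra|].
    left. apply exp_increasing. unfold p' in *. nra. }
  assert (E2 : exp (-r*(q'-x)) <= exp (-r*del)).
  { destruct (Req_dec (-r*(q'-x)) (-r*del)) as [He|He]; [rewrite He; lra|].
    left. apply exp_increasing. unfold q' in *. nra. }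
  assert (Hex : r*del < exp (r*del)).
  { pose proof (exp_ineq1 (r*del)). assert (r*del <> 0) by nra. specialize (H H0). lra. }
  replace (-r*del) with (-(r*del)) in E1, E2 by ring.
  rewrite exp_Ropp in E1, E2.
  pose proof (exp_pos (r*del)) as Hep.
  assert (H2M : 2*M < eps * exp (r*del)).
  { assert (2*M = eps * (R0*del)) by (unfold R0; field; lra).
    assert (R0*del < r*del) by nra. nra. }
  assert (Hu0 : 0 < u x) by (apply Hsol; unfold p,q; lra).
  unfold u in *. rewrite Rabs_right by lra.
  assert (M * / exp (r*del) * exp (r*del) = M) by (field; lra).
  assert (M * / exp (r*del) < eps/2).
  { apply Rmult_lt_reg_r with (exp (r*del)); [lra|]. nra. }
  assert (0 <= M * / exp (r*del)) by (apply Rmult_le_pos; [lra| left; apply Rinv_0_lt_compat; lra]).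
  nra.
Qed.

Theorem corollary3p1
  (a : R -> R) (n : nat) (z : nat -> R)
  (* a is continuous on [0,1] *)
  (Ha_cont : forall x, 0 <= x <= 1 -> forall eps, 0 < eps ->
     exists delta, 0 < delta /\ forall y, 0 <= y <= 1 -> Rabs (y - x) < delta ->
       Rabs (a y - a x) < eps)
  (* the nodal points 0 = z_0 < z_1 < ... < z_n = 1 with at least one
     negative and one positive interval (n >= 2) *)
  (Hn : (2 <= n)%nat)
  (Hz0 : z 0%nat = 0) (Hzn : z n = 1)
  (Hzinc : forall k, (k < n)%nat -> z k < z (S k))
  (* a vanishes at all the endpoints *)
  (Hazero : forall k, (k <= n)%nat -> a (z k) = 0)
  (* on each interval (z_k, z_{k+1}) a has a strict sign *)
  (Hsign : forall k, (k < n)%nat ->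
     (forall x, z k < x < z (S k) -> a x < 0) \/
     (forall x, z k < x < z (S k) -> 0 < a x))
  (* adjacent intervals have opposite signs (interlacing) *)
  (Halt : forall k, (S k < n)%nat ->
     ((forall x, z k < x < z (S k) -> a x < 0) <->
      (forall x, z (S k) < x < z (S (S k)) -> 0 < a x)))
  (* a negative interval (alpha_j, beta_j) = (z_k, z_{k+1}) *)
  (k : nat) (Hk : (k < n)%nat)
  (Hneg : forall x, z k < x < z (S k) -> a x < 0)
  (* l lam = the minimal positive solution for parameter lam *)
  (l : R -> R -> R)
  (Hl : forall lam, minimal_pos_solution a lam (z k) (z (S k)) (l lam)) :
  (forall x, z k < x < z (S k) -> is_lim (fun lam => l lam x) m_infty 0) /\
  (forall c d, z k < c -> d < z (S k) ->
     forall eps, 0 < eps ->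
       exists L, forall lam, lam < L ->
         forall x, c <= x <= d -> Rabs (l lam x) < eps).

Proof.
  assert (Hmono : forall j i, (i <= j)%nat -> (j <= n)%nat -> z i <= z j).
  { induction j as [|j IH]; intros i Hij Hjn.
    - replace i with 0%nat by lia. lra.
    - destruct (Nat.eq_dec i (S j)) as [->|Hne]; [lra|].
      assert (z i <= z j) by (apply IH; lia).
      assert (z j < z (S j)) by (apply Hzinc; lia). lra. }
  assert (H0k : 0 <= z k) by (rewrite <- Hz0; apply Hmono; lia).
  assert (Hk1 : z (S k) <= 1) by (rewrite <- Hzn; apply Hmono; lia).
  assert (Hac : forall x, z k < x < z (S k) -> continuity_pt a x).
  { intros x Hx. unfold continuity_pt, continue_in, limit1_in, limit_in.
    intros eps Heps.
    destruct (Ha_cont x ltac:(lra) eps Heps) as [del [Hdel H]].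
    exists (Rmin del (Rmin x (1-x))). split.
    { apply Rmin_glb_lt; [lra|apply Rmin_glb_lt; lra]. }
    intros y [_ Hy]. simpl in *. unfold R_dist in *.
    pose proof (Rmin_l del (Rmin x (1-x))).
    pose proof (Rmin_r del (Rmin x (1-x))).
    pose proof (Rmin_l x (1-x)). pose proof (Rmin_r x (1-x)).
    apply Rabs_def2 in Hy. destruct Hy.
    apply H. lra. apply Rabs_def1; lra. }
  assert (Hsol : forall lam x, z k < x < z (S k) -> 0 < l lam x /\ ex_derive (l lam) x /\
      is_derive (Derive (l lam)) x (- (lam * l lam x + a x * (l lam x) ^ 2))).
  { intros lam x Hx. destruct (Hl lam) as [[H _] _]. apply H; auto. }
  pose proof (key a (z k) (z (S k)) l Hac Hneg Hsol) as K.
  split; [|exact K].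
  intros x Hx. apply is_lim_spec. intros eps.
  destruct (K x x ltac:(lra) ltac:(lra) eps (cond_pos eps)) as [L HL].
  exists L. intros lam Hlam. rewrite Rminus_0_r. apply HL; lra.
Qed.
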